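(* Let $\mathbf P=(P,\leq,{}',0,1)$ be an orthogonal lub-complete poset. Then the following conditions are equivalent: (i) $\mathbf P$ is an orthocomplemented poset. (ii) For all $x,y\in P$, $x\leq y$ implies $x\rightarrow_C y=1$.
   Context: $(P,\leq,{}',0,1)$ is a bounded poset with an antitone involution ${}'$ ($x\leq y\Rightarrow y'\leq x'$, $x''=x$). It is orthogonal if $x\leq y'$ implies that the supremum $x\vee y$ exists. It is lub-complete if for every lower bound $x$ of a finite subset $M$ of $P$ there is a maximal lower bound of $M$ above $x$. It is orthocomplemented if $x\vee x'=1$ for every $x\in P$. For $A\subseteq P$, $U(A)$ is the set of upper bounds of $A$, $U(x,y)=U(\{x,y\})$, and $\mathrm{Min}\,A$ is the set of minimal elements of $A$. The classical implication is $x\rightarrow_C y:=\mathrm{Min}\,U(x',y)\subseteq P$; $x\rightarrow_C y=1$ means $x\rightarrow_C y=\{1\}$. *)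

(* Defs.v *)
From HB Require Import structures.
From mathcomp Require Import all_boot all_order.
Set Implicit Arguments. Unset Strict Implicit. Unset Printing Implicit Defensive.
Import Order.Theory.
Local Open Scope order_scope.

(* A bounded poset (T, <=, \bot = 0, \top = 1) with a unary operation c (= ').
   "Antitone involution" is imposed by explicit hypotheses in the theorem. *)

Section PosetDefs.
Context {disp : Order.disp_t} {T : tbPOrderType disp}.

Definition antitone (c : T -> T) : Prop := forall x y : T, x <= y -> c y <= c x.
Definition involutive_op (c : T -> T) : Prop := forall x : T, c (c x) = x.

Definition U2 (x y : T) (z : T) : Prop := x <= z /\ y <= z.

Definition is_sup (x y s : T) : Prop :=
  U2 x y s /\ forall z, U2 x y z -> s <= z.

Definition Min (A : T -> Prop) (z : T) : Prop :=
  A z /\ forall w, A w -> w <= z -> w = z.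

Definition Max (A : T -> Prop) (z : T) : Prop :=
  A z /\ forall w, A w -> z <= w -> w = z.

Definition lower_bound (M : seq T) (x : T) : Prop := forall m, m \in M -> x <= m.

Definition orthogonal (c : T -> T) : Prop :=
  forall x y : T, x <= c y -> exists s, is_sup x y s.

Definition lub_complete : Prop :=
  forall (M : seq T) (x : T), lower_bound M x ->
    exists2 m, Max (lower_bound M) m & x <= m.

Definition orthocomplemented (c : T -> T) : Prop :=
  forall x : T, is_sup x (c x) \top.

Definition implC (c : T -> T) (x y : T) : T -> Prop := Min (U2 (c x) y).

(* x ->_C y = 1 means x ->_C y = {1} *)
Definition implC_is_one (c : T -> T) (x y : T) : Prop :=
  forall z : T, implC c x y z <-> z = \top.
End PosetDefs.

(* Main.v *)
Require Import Defs.
From mathcomp Require Import all_boot all_order.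
Import Order.Theory.
Local Open Scope order_scope.

Theorem theorem1 (disp : Order.disp_t) (T : tbPOrderType disp) (c : T -> T)
  (c_antitone : antitone c) (c_invol : involutive_op c)
  (P_orth : orthogonal c) (P_lub : @lub_complete disp T) :
  orthocomplemented c <-> (forall x y : T, x <= y -> implC_is_one c x y).
Proof.
split.
- move=> Hoc x y Hxy z; split.
  + move=> [[H1 H2] _].
    have [_ Hs] := Hoc x.
    apply/eqP; rewrite eq_le lex1 /=.
    apply: Hs; split => //; exact: le_trans Hxy H2.
  + move=> ->; split; first by split; apply: lex1.
    move=> w [H1 H2] _.
    have [_ Hs] := Hoc x.
    apply/eqP; rewrite eq_le lex1 /=.
    apply: Hs; split => //; exact: le_trans Hxy H2.
- move=> H x; split; first by split; apply: lex1.
  move=> z [Hxz Hcxz].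
  have Hlb : lower_bound [:: x; c x] (c z).
    move=> m; rewrite !inE => /orP[/eqP->|/eqP->].
    + by rewrite -(c_invol x); apply: c_antitone.
    + by apply: c_antitone.
  have [m [Hm Hmax] Hzm] := P_lub _ _ Hlb.
  have Hmx : m <= x by apply: Hm; rewrite !inE eqxx.
  have Hmcx : m <= c x by apply: Hm; rewrite !inE eqxx orbT.
  have Hcm : implC c x x (c m).
    split.
    + split; first exact: c_antitone.
      by rewrite -(c_invol x); apply: c_antitone.
    + move=> w [Hw1 Hw2] Hwm.
      have Hlw : lower_bound [:: x; c x] (c w).
        move=> k; rewrite !inE => /orP[/eqP->|/eqP->].
        * by rewrite -(c_invol x); apply: c_antitone.
        * by apply: c_antitone.
      have Hmw : m <= c w by rewrite -(c_invol m); apply: c_antitone.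
      have := Hmax _ Hlw Hmw.
      by move=> <-; rewrite c_invol.
  have Htop := (proj1 (H x x (lexx x) (c m)) Hcm).
  rewrite -Htop -(c_invol z); exact: c_antitone.
Qed.
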